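(* Let $Q$ be a positive definite quadratic form on $\mathbb{R}^2$, let $\Lambda\subseteq\mathbb{R}^2$ be a lattice of rank $2$, and let $v\in\mathbb{R}^2$. Let $c=\min_{w\in\Lambda}Q(v-w)$ and $\lambda=\min_{w\in\Lambda\setminus\{0\}}Q(w)$. Then there exists a set $P\subseteq\Lambda$ of four points forming the vertices of a translated fundamental parallelogram of $\Lambda$ (i.e. $P=\{w_0,w_0+u_1,w_0+u_2,w_0+u_1+u_2\}$ with $w_0\in\Lambda$ and $u_1,u_2$ a basis of $\Lambda$) such that $Q(v-w)\ge c+\lambda$ for all $w\in\Lambda\setminus P$. *)

(* Defs.v *)
From mathcomp Require Import all_boot all_order all_algebra.
From mathcomp Require Import reals.
Set Implicit Arguments. Unset Strict Implicit. Unset Printing Implicit Defensive.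
Import Order.TTheory GRing.Theory Num.Theory.
Local Open Scope ring_scope.

Section Defs.
Variable R : realType.
Definition pt := (R * R)%type.

Definition padd (p q : pt) : pt := (p.1 + q.1, p.2 + q.2).
Definition psub (p q : pt) : pt := (p.1 - q.1, p.2 - q.2).
Definition pzscale (m : int) (p : pt) : pt := (m%:~R * p.1, m%:~R * p.2).
Definition pdet (p q : pt) : R := p.1 * q.2 - p.2 * q.1.

Definition qform (a b c : R) (p : pt) : R := a * p.1 ^+ 2 + b * p.1 * p.2 + c * p.2 ^+ 2.

Definition pos_def (a b c : R) : Prop := forall p : pt, p <> (0, 0) -> 0 < qform a b c p.

Definition in_lattice (b1 b2 : pt) (w : pt) : Prop :=
  exists m n : int, w = padd (pzscale m b1) (pzscale n b2).

Definition lattice_basis (b1 b2 u1 u2 : pt) : Prop :=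
  [/\ in_lattice b1 b2 u1, in_lattice b1 b2 u2, pdet u1 u2 <> 0 &
      forall w, in_lattice b1 b2 w -> in_lattice u1 u2 w].
End Defs.

(* Main.v *)
Require Import Defs.
From mathcomp Require Import all_boot all_order all_algebra.
From mathcomp Require Import reals.
From mathcomp Require Import ring lra zify.
From Stdlib Require Import Classical.
Import Order.TTheory GRing.Theory Num.Theory.
Local Open Scope ring_scope.

Section Tri.
Variable R : realType.

Definition G (p12 p13 p23 s t : R) (M N : int) : R :=
  p12 * ((s - t) - (M%:~R - N%:~R))^+2 + p13 * (s - M%:~R)^+2 + p23 * (t - N%:~R)^+2.

Lemma int_cases (M N : int) :
  ((M = 0 /\ N = 0) \/ (M = 1 /\ N = 0) \/ (M = 1 /\ N = 1)) \/
  ((M = 2 /\ N = 1) \/ (M = 0 /\ N = 1) \/ (M = 0 /\ N = -1)) \/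
  ((2 <= M /\ 2 <= N) \/ (M <= -1 /\ N <= -1)) \/
  ((2 <= M /\ 2 <= M - N) \/ (M <= -1 /\ M - N <= -1)) \/
  ((2 <= N /\ M - N <= -1) \/ (N <= -1 /\ 2 <= M - N)).
Proof. lia. Qed.

Lemma gain_up (p x : R) (j : int) : 0 <= p -> 0 <= x <= 1 -> 2 <= j ->
  p <= p * ((x - j%:~R)^+2 - (x - (j - 1)%:~R)^+2).
Proof.
move=> hp /andP[h0 h1] hj.
have hj' : 2 <= j%:~R :> R by rewrite (ler_int R 2 j).
rewrite -{1}(mulr1 p); apply: ler_wpM2l => //.
rewrite intrB; nra.
Qed.

Lemma gain_dn (p x : R) (j : int) : 0 <= p -> 0 <= x <= 1 -> j <= -1 ->
  p <= p * ((x - j%:~R)^+2 - (x - (j + 1)%:~R)^+2).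
Proof.
move=> hp /andP[h0 h1] hj.
have hj' : j%:~R <= -1 :> R.
  have := hj; rewrite -(ler_int R) => /le_trans; apply; by rewrite intrN.
rewrite -{1}(mulr1 p); apply: ler_wpM2l => //.
rewrite intrD; nra.
Qed.

Arguments gain_up {p x j}.
Arguments gain_dn {p x j}.
Definition six (M N : int) : Prop :=
  ((M = 0 /\ N = 0) \/ (M = 1 /\ N = 0) \/ (M = 1 /\ N = 1)) \/
  ((M = 2 /\ N = 1) \/ (M = 0 /\ N = 1) \/ (M = 0 /\ N = -1)).

Lemma tri_core (p12 p13 p23 s t c l : R) :
  0 <= p12 -> 0 <= p13 -> 0 <= p23 ->
  l <= p12 + p13 -> l <= p12 + p23 -> l <= p13 + p23 ->
  0 <= t -> t <= s -> s <= 1 ->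
  (forall M N, c <= G p12 p13 p23 s t M N) ->
  forall M N, ~ six M N -> c + l <= G p12 p13 p23 s t M N.
Proof.
move=> h12 h13 h23 l1 l2 l3 t0 ts s1 hc M N hsix.
have hs : 0 <= s <= 1 by apply/andP; split => //; lra.
have ht : 0 <= t <= 1 by apply/andP; split => //; lra.
have hg : 0 <= s - t <= 1 by apply/andP; split; lra.
have cast : forall (A B : int), (A - B)%:~R = A%:~R - B%:~R :> R by move=> *; rewrite intrB.
case: (int_cases M N) => [H|[H|[[H|H]|[[H|H]|[H|H]]]]].
- by exfalso; apply: hsix; left.
- by exfalso; apply: hsix; right.
- case: H => HM HN.
  have hy := hc (M - 1) (N - 1).
  have g1 := gain_up h13 hs HM. have g2 := gain_up h23 ht HN.
  rewrite /G !intrB in hy g1 g2 *; lra.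
- case: H => HM HN.
  have hy := hc (M + 1) (N + 1).
  have g1 := gain_dn h13 hs HM. have g2 := gain_dn h23 ht HN.
  rewrite /G !intrD in hy g1 g2 *; lra.
- case: H => HM HK.
  have hy := hc (M - 1) N.
  have g1 := gain_up h13 hs HM. have g2 := gain_up h12 hg HK.
  rewrite /G !intrB in hy g1 g2 *; lra.
- case: H => HM HK.
  have hy := hc (M + 1) N.
  have g1 := gain_dn h13 hs HM. have g2 := gain_dn h12 hg HK.
  rewrite /G ?intrD ?intrB in hy g1 g2 *; lra.
- case: H => HN HK.
  have hy := hc M (N - 1).
  have g1 := gain_up h23 ht HN. have g2 := gain_dn h12 hg HK.
  rewrite /G ?intrD ?intrB in hy g1 g2 *; lra.
- case: H => HN HK.
  have hy := hc M (N + 1).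
  have g1 := gain_dn h23 ht HN. have g2 := gain_up h12 hg HK.
  rewrite /G ?intrD ?intrB in hy g1 g2 *; lra.
Qed.

Ltac kill := exfalso; match goal with H : (_,_) <> _ |- _ => apply: H; congr pair; lia end.

Definition inP (x0 y0 a1 b1 a2 b2 M N : int) : Prop :=
  [\/ (M, N) = (x0, y0), (M, N) = (x0 + a1, y0 + b1),
      (M, N) = (x0 + a2, y0 + b2) | (M, N) = (x0 + a1 + a2, y0 + b1 + b2)].

Definition PStmt (P : int -> int -> R) (c l : R) :=
  exists x0 y0 a1 b1 a2 b2 : int, (a1 * b2 - b1 * a2 = 1 \/ a1 * b2 - b1 * a2 = -1) /\
   forall M N, ~ inP x0 y0 a1 b1 a2 b2 M N -> c + l <= P M N.

Lemma tri_final (p12 p13 p23 s t c l : R) :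
  0 <= p12 -> 0 <= p13 -> 0 <= p23 ->
  l <= p12 + p13 -> l <= p12 + p23 -> l <= p13 + p23 ->
  0 <= t -> t <= s -> s <= 1 ->
  (forall M N, c <= G p12 p13 p23 s t M N) ->
  PStmt (G p12 p13 p23 s t) c l.
Proof.
move=> h12 h13 h23 l1 l2 l3 t0 ts s1 hc.
have core := @tri_core _ _ _ _ _ _ _ h12 h13 h23 l1 l2 l3 t0 ts s1 hc.
have e1 : G p12 p13 p23 s t 2 1 + G p12 p13 p23 s t 0 1 =
   2 * G p12 p13 p23 s t 1 1 + 2 * (p12 + p13) by rewrite /G /=; ring.
have e2 : G p12 p13 p23 s t 2 1 + G p12 p13 p23 s t 0 (-1) =
   2 * G p12 p13 p23 s t 1 0 + 2 * (p13 + p23) by rewrite /G /=; ring.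
have e3 : G p12 p13 p23 s t 0 1 + G p12 p13 p23 s t 0 (-1) =
   2 * G p12 p13 p23 s t 0 0 + 2 * (p12 + p23) by rewrite /G /=; ring.
have c11 := hc 1 1. have c10 := hc 1 0. have c00 := hc 0 0.
have inp : forall a b : int, a = b -> a = b by [].
case: (ltP (G p12 p13 p23 s t 2 1) (c + l)) => H21.
  exists 0, 0, 1, 0, 1, 1; split; first by left.
  move=> M N hP; case: (classic (six M N)) => hs; last exact: core.
  case: hs hP => [[[-> ->]|[[-> ->]|[-> ->]]]|[[-> ->]|[[-> ->]|[-> ->]]]] hP.
  - by exfalso; apply: hP; rewrite /inP; apply: Or41.
  - by exfalso; apply: hP; rewrite /inP; apply: Or42.
  - by exfalso; apply: hP; rewrite /inP; apply: Or43.
  - by exfalso; apply: hP; rewrite /inP; apply: Or44.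
  - lra.
  - lra.
case: (ltP (G p12 p13 p23 s t 0 1) (c + l)) => H01.
  exists 0, 0, 1, 0, 0, 1; split; first by left.
  move=> M N hP; case: (classic (six M N)) => hs; last exact: core.
  case: hs hP => [[[-> ->]|[[-> ->]|[-> ->]]]|[[-> ->]|[[-> ->]|[-> ->]]]] hP.
  - by exfalso; apply: hP; rewrite /inP; apply: Or41.
  - by exfalso; apply: hP; rewrite /inP; apply: Or42.
  - by exfalso; apply: hP; rewrite /inP; apply: Or44.
  - lra.
  - by exfalso; apply: hP; rewrite /inP; apply: Or43.
  - lra.
exists 0, (-1), 0, 1, 1, 1; split; first by right.
move=> M N hP; case: (classic (six M N)) => hs; last exact: core.
case: hs hP => [[[-> ->]|[[-> ->]|[-> ->]]]|[[-> ->]|[[-> ->]|[-> ->]]]] hP.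
- by exfalso; apply: hP; rewrite /inP; apply: Or42.
- by exfalso; apply: hP; rewrite /inP; apply: Or43.
- by exfalso; apply: hP; rewrite /inP; apply: Or44.
- lra.
- lra.
- by exfalso; apply: hP; rewrite /inP; apply: Or41.
Qed.

Lemma PStmt_ext (P Q : int -> int -> R) c l :
  (forall M N, P M N = Q M N) -> PStmt P c l -> PStmt Q c l.
Proof.
move=> e [x0 [y0 [a1 [b1 [a2 [b2 [hd H]]]]]]].
exists x0, y0, a1, b1, a2, b2; split => // M N hP; rewrite -e; exact: H.
Qed.

Lemma PStmt_swap (P : int -> int -> R) c l :
  PStmt P c l -> PStmt (fun M N => P N M) c l.
Proof.
move=> [x0 [y0 [a1 [b1 [a2 [b2 [hd H]]]]]]].
exists y0, x0, b1, a1, b2, a2; split.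
  by case: hd => hd; [right|left]; lia.
move=> M N hP; apply: H => hin; apply: hP.
case: hin => -[-> ->]; rewrite /inP;
  [apply: Or41 | apply: Or42 | apply: Or43 | apply: Or44]; by [].
Qed.

Lemma PStmt_shift (P : int -> int -> R) c l i j :
  PStmt P c l -> PStmt (fun M N => P (M - i) (N - j)) c l.
Proof.
move=> [x0 [y0 [a1 [b1 [a2 [b2 [hd H]]]]]]].
exists (x0 + i), (y0 + j), a1, b1, a2, b2; split => //.
move=> M N hP; apply: H => hin; apply: hP.
case: hin => -[e1 e2]; rewrite /inP;
  [apply: Or41 | apply: Or42 | apply: Or43 | apply: Or44]; congr pair; lia.
Qed.

Lemma coord (p12 p13 p23 x y c l : R) :
  0 <= p12 -> 0 <= p13 -> 0 <= p23 ->
  l <= p12 + p13 -> l <= p12 + p23 -> l <= p13 + p23 ->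
  (forall M N, c <= G p12 p13 p23 x y M N) ->
  PStmt (G p12 p13 p23 x y) c l.
Proof.
move=> h12 h13 h23 l1 l2 l3 hc.
set i := Num.floor x; set j := Num.floor y.
have fi1 := floor_le x; have fi2 := floorD1_gt x.
have fj1 := floor_le y; have fj2 := floorD1_gt y.
rewrite intrD in fi2; rewrite intrD in fj2.
have sh : forall M N, G p12 p13 p23 x y M N =
    G p12 p13 p23 (x - i%:~R) (y - j%:~R) (M - i) (N - j).
  by move=> M N; rewrite /G !intrB; ring.
apply: (@PStmt_ext (fun M N => G p12 p13 p23 (x - i%:~R) (y - j%:~R) (M - i) (N - j))).
  by move=> M N; rewrite sh.
apply: PStmt_shift.
case: (leP (y - j%:~R) (x - i%:~R)) => hts.
  apply: tri_final => //; [lra | lra | ].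
  move=> M N; have := hc (M + i) (N + j); rewrite sh.
  by rewrite !addrK.
have sw : forall M N, G p12 p23 p13 (y - j%:~R) (x - i%:~R) N M =
   G p12 p13 p23 (x - i%:~R) (y - j%:~R) M N by move=> M N; rewrite /G; ring.
apply: (@PStmt_ext (fun M N => G p12 p23 p13 (y - j%:~R) (x - i%:~R) N M)) => //.
apply: PStmt_swap; apply: tri_final => //; [lra | lra | lra | lra | ].
move=> M N; rewrite sw; have := hc (N + i) (M + j); rewrite sh.
by rewrite !addrK.
Qed.
End Tri.
Arguments G {R}.
Arguments PStmt {R}.

Section Lat.
Variable R : realType.

Definition lin (e1 e2 : pt R) (m n : int) : pt R := padd (pzscale m e1) (pzscale n e2).

Lemma lin_comp (b1 b2 : pt R) p q r s x y :
  lin (lin b1 b2 p q) (lin b1 b2 r s) x y = lin b1 b2 (x * p + y * r) (x * q + y * s).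
Proof. rewrite /lin /padd /pzscale /= !intrD !intrM; congr pair; ring. Qed.

Lemma lin_add (e1 e2 : pt R) m n m' n' :
  padd (lin e1 e2 m n) (lin e1 e2 m' n') = lin e1 e2 (m + m') (n + n').
Proof. rewrite /lin /padd /pzscale /= !intrD; congr pair; ring. Qed.

Lemma lin_det (b1 b2 : pt R) p q r s :
  pdet (lin b1 b2 p q) (lin b1 b2 r s) = (p * s - q * r)%:~R * pdet b1 b2.
Proof. rewrite /lin /pdet /padd /pzscale /= !intrB !intrM; ring. Qed.

Lemma unimod_sq (d : int) : d = 1 \/ d = -1 -> d * d = 1.
Proof. by case=> ->. Qed.

Lemma lin_inv (b1 b2 : pt R) p q r s x y :
  (p * s - q * r = 1 \/ p * s - q * r = -1) ->
  lin b1 b2 x y = lin (lin b1 b2 p q) (lin b1 b2 r s)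
     ((p * s - q * r) * (x * s - y * r)) ((p * s - q * r) * (y * p - x * q)).
Proof.
move=> /unimod_sq hd; rewrite lin_comp.
set d := p * s - q * r.
have E1 : d * (x * s - y * r) * p + d * (y * p - x * q) * r = (d * d) * x.
  by rewrite /d; ring.
have E2 : d * (x * s - y * r) * q + d * (y * p - x * q) * s = (d * d) * y.
  by rewrite /d; ring.
by rewrite E1 E2 hd !mul1r.
Qed.

Definition EB (b1 b2 e1 e2 : pt R) : Prop :=
  pdet e1 e2 <> 0 /\ forall w, in_lattice b1 b2 w <-> exists m n, w = lin e1 e2 m n.

Lemma EB_refl (b1 b2 : pt R) : pdet b1 b2 <> 0 -> EB b1 b2 b1 b2.
Proof. by move=> h; split. Qed.

Lemma EB_trans (b1 b2 e1 e2 : pt R) p q r s :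
  EB b1 b2 e1 e2 -> (p * s - q * r = 1 \/ p * s - q * r = -1) ->
  EB b1 b2 (lin e1 e2 p q) (lin e1 e2 r s).
Proof.
move=> [hd hl] hu; split.
  rewrite lin_det => /eqP; rewrite mulf_eq0 => /orP[/eqP|/eqP //].
  case: hu => -> /= h; move: h; [| rewrite intrN]; lra.
move=> w; split.
  move=> /hl [m [n ->]]; eexists; eexists; exact: lin_inv.
move=> [m [n ->]]; apply/hl; rewrite lin_comp; eexists; eexists; reflexivity.
Qed.

Lemma lin10 (e1 e2 : pt R) : lin e1 e2 1 0 = e1.
Proof. by case: e1 e2 => [? ?] [? ?]; rewrite /lin /padd /pzscale /=; congr pair; ring. Qed.
Lemma lin01 (e1 e2 : pt R) : lin e1 e2 0 1 = e2.
Proof. by case: e1 e2 => [? ?] [? ?]; rewrite /lin /padd /pzscale /=; congr pair; ring. Qed.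

Lemma EB_basis (b1 b2 u1 u2 : pt R) : EB b1 b2 u1 u2 -> lattice_basis b1 b2 u1 u2.
Proof.
move=> [hd hl]; split => //.
- by apply/hl; exists 1, 0; rewrite lin10.
- by apply/hl; exists 0, 1; rewrite lin01.
- by move=> w /hl.
Qed.

Lemma det_nz0 (p q : pt R) : pdet p q <> 0 -> p <> (0, 0) /\ q <> (0, 0).
Proof.
by move=> h; split => e; apply: h; rewrite /pdet e /=; ring.
Qed.
Lemma coords_eq (p q v : pt R) : pdet p q != 0 ->
  v = (pdet v q / pdet p q * p.1 + pdet p v / pdet p q * q.1,
       pdet v q / pdet p q * p.2 + pdet p v / pdet p q * q.2).
Proof.
case: p q v => [p1 p2] [q1 q2] [v1 v2]; rewrite /pdet /= => h.
congr pair; field; exact: h.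
Qed.
End Lat.
Arguments coords_eq {R}.
Arguments lin {R}.
Arguments EB {R}.
Arguments EB_refl {R}.
Arguments EB_trans {R}.
Arguments det_nz0 {R}.
Arguments lin10 {R}.
Arguments lin01 {R}.
Arguments lin_add {R}.
Arguments lin_det {R}.
Arguments lin_comp {R}.
Arguments EB_basis {R}.
Arguments lin_inv {R}.


Theorem lemma4p7 (R : realType) (a b c : R) (b1 b2 v : pt R) (cmin lam : R) :
  pos_def a b c ->
  pdet b1 b2 <> 0 ->
  (* cmin = min_{w in Lambda} Q(v - w) *)
  (exists w, in_lattice b1 b2 w /\ qform a b c (psub v w) = cmin) ->
  (forall w, in_lattice b1 b2 w -> cmin <= qform a b c (psub v w)) ->
  (* lam = min_{w in Lambda \ {0}} Q(w) *)
  (exists w, [/\ in_lattice b1 b2 w, w <> (0, 0) & qform a b c w = lam]) ->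
  (forall w, in_lattice b1 b2 w -> w <> (0, 0) -> lam <= qform a b c w) ->
  exists w0 u1 u2 : pt R,
    [/\ in_lattice b1 b2 w0, lattice_basis b1 b2 u1 u2 &
      forall w, in_lattice b1 b2 w ->
        w <> w0 -> w <> padd w0 u1 -> w <> padd w0 u2 -> w <> padd (padd w0 u1) u2 ->
        cmin + lam <= qform a b c (psub v w)].
Proof.
move=> Hpd Hdet [w1 [Hw1 Hc]] Hcmin [wl [Hwl Hwl0 Hlam]] Hlmin.
have EB0 := EB_refl _ _ Hdet.
case: Hwl => m0 [n0 Ewl].
have Ewl' : wl = lin b1 b2 m0 n0 by [].
set g := gcdz m0 n0.
have hg1 : g = 1.
  have /dvdzP [q1 e1] := dvdz_gcdl m0 n0.
  have /dvdzP [q2 e2] := dvdz_gcdr m0 n0.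
  rewrite -/g in e1 e2.
  set w' := lin b1 b2 q1 q2.
  have ew : wl = (g%:~R * w'.1, g%:~R * w'.2).
    by rewrite Ewl' e1 e2 /w' /lin /padd /pzscale /= !intrM; congr pair; ring.
  have w'0 : w' <> (0,0).
    by move=> h; apply: Hwl0; rewrite ew h /= !mulr0.
  have lw := Hlmin w' (ex_intro _ q1 (ex_intro _ q2 erefl)) w'0.
  have pw := Hpd w' w'0.
  have qe : qform a b c wl = (g%:~R)^+2 * qform a b c w' by rewrite ew /qform /=; ring.
  have hg2 : (g * g)%:~R <= 1 :> R by rewrite intrM; nra.
  have hg3 : g * g <= 1 by rewrite -(ler_int R).
  have g0 : 0 <= g by [].
  have gn0 : g != 0.
    apply/negP; rewrite gcdz_eq0 => /andP[/eqP hm /eqP hn]; apply: Hwl0.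
    by rewrite Ewl' hm hn /lin /padd /pzscale /=; congr pair; ring.
  lia.
case: (Bezoutz m0 n0) => u' [v' huv]; rewrite -/g hg1 in huv.
have EB1 : EB b1 b2 wl (lin b1 b2 (-v') u').
  by rewrite Ewl'; apply: EB_trans => //; left; lia.
set f := lin b1 b2 (-v') u' in EB1.
set A := qform a b c wl.
have Apos : 0 < A by exact: Hpd.
set gf := qform a b c (padd wl f) - A - qform a b c f.
set k := Num.floor (gf / (2 * A)).
have EB2 : EB b1 b2 (lin wl f 1 0) (lin wl f k (-1)).
  by apply: EB_trans => //; right; lia.
rewrite lin10 in EB2.
set e2 := lin wl f k (-1) in EB2.
set C := qform a b c e2.
set ga := qform a b c (padd wl e2) - A - C.
have hga : ga = 2 * k%:~R * A - gf.
  by rewrite /ga /e2 /C /gf /A /lin /padd /pzscale /qform /= !intrN /=; ring.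
have fk1 := floor_le (gf / (2 * A)).
have fk2 := floorD1_gt (gf / (2 * A)).
rewrite intrD -/k in fk2; rewrite -/k in fk1.
set z := gf / (2 * A) in fk1 fk2.
have ez : gf = z * (2 * A) by rewrite /z divfK // mulf_neq0 // lt0r_neq0.
have ga1 : ga <= 0 by rewrite hga ez; nra.
have ga2 : - (2 * A) <= ga by rewrite hga ez; nra.
case: EB2 => Hd2 Hl2.
have latt : forall m n, in_lattice b1 b2 (lin wl e2 m n) by move=> m n; apply/Hl2; eauto.
have e2nz : e2 <> (0,0) by case: (det_nz0 _ _ Hd2).
have hC : lam <= C.
  apply: Hlmin e2nz; rewrite -(lin01 wl e2); exact: latt.
have hS : lam <= qform a b c (padd wl e2).
  have -> : padd wl e2 = lin wl e2 1 1 by rewrite /lin /padd /pzscale /=; congr pair; ring.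
  apply: Hlmin; first exact: latt.
  have : pdet (lin wl e2 1 1) (lin wl e2 0 1) <> 0.
    by rewrite lin_det mul1r mulr0 subr0 /= mul1r.
  by case/det_nz0.
have hA : A = lam by [].
set sg := pdet v e2 / pdet wl e2.
set ta := pdet wl v / pdet wl e2.
have Hd2' : pdet wl e2 != 0 by apply/eqP.
have ev : v = (sg * wl.1 + ta * e2.1, sg * wl.2 + ta * e2.2).
  exact: coords_eq.
have qid : forall m n, 2 * qform a b c (psub v (lin wl e2 m n)) =
   G (- ga) (2 * A + ga) (2 * C + ga) sg ta m n.
  by move=> m n; rewrite ev /G /ga /C /A /qform /psub /lin /padd /pzscale /=; ring.
have hc : forall M N, 2 * cmin <= G (- ga) (2 * A + ga) (2 * C + ga) sg ta M N.
  by move=> M N; rewrite -qid; have := Hcmin _ (latt M N); lra.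
have hga' : qform a b c (padd wl e2) = ga + A + C by rewrite /ga; ring.
have := @coord R (- ga) (2 * A + ga) (2 * C + ga) sg ta (2 * cmin) (2 * lam).
case; [lra|lra|lra|lra|lra|lra|exact: hc|].
move=> x0 [y0 [a1 [b1' [a2 [b2' [hd H]]]]]].
exists (lin wl e2 x0 y0), (lin wl e2 a1 b1'), (lin wl e2 a2 b2'); split.
- exact: latt.
- by apply: EB_basis; apply: EB_trans.
- move=> w /Hl2 [m [n ->]] n1 n2 n3 n4.
  have : 2 * cmin + 2 * lam <= G (- ga) (2 * A + ga) (2 * C + ga) sg ta m n.
    apply: H => hin; move: n1 n2 n3 n4; rewrite !lin_add.
    by case: hin => -[-> ->] h1 h2 h3 h4; [apply: h1|apply: h2|apply: h3|apply: h4].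
  rewrite -qid; lra.
Qed.
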